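(* Let $k\ge1$ and let $m>3$ be a vertex of the finite tree $\mathcal{T}_{2,3}^k$. Then the number of children of $m$ in $\mathcal{T}_{2,3}^k$ equals $$\sum_{j=0}^{\lfloor m/4\rfloor}\binom{k}{j}\binom{k-j}{m-4j}.$$
   Context: For integers $b>1$, $e>1$ and a positive integer $n=\sum_{i=0}^{r} d_i b^i$ written in base $b$ (digits $0\le d_i\le b-1$), the $e$-power base-$b$ happy function is $S_{e,b}(n)=\sum_{i=0}^{r} d_i^e$. A positive integer $n$ is $e$-power $b$-happy if $S_{e,b}^{\ell}(n)=1$ for some $\ell\ge 1$. The tree $\mathcal{T}_{e,b}$ has as vertices all $e$-power $b$-happy numbers, with root $1$; a happy number $n\neq 1$ is a child of the vertex $S_{e,b}(n)$. For $k\ge1$, $\mathcal{T}_{e,b}^k$ is the subtree on the happy numbers having at most $k$ digits in base $b$ (i.e. $n<b^k$); thus the children of a vertex $m$ in $\mathcal{T}_{e,b}^k$ are the happy integers $n$ with $1\le n<b^k$, $n\neq1$, and $S_{e,b}(n)=m$. Binomial coefficients $\binom{a}{c}$ are taken to be $0$ when $c<0$ or $c>a$ (including when $a<0$). *)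

(* Defs.v *)
From mathcomp Require Import all_boot.
Set Implicit Arguments. Unset Strict Implicit. Unset Printing Implicit Defensive.

(* Sum of e-th powers of the base-b digits of n; fuel = n suffices for b > 1. *)
Fixpoint digpow_aux (fuel e b n : nat) : nat :=
  match fuel with
  | 0 => 0
  | f.+1 => if n == 0 then 0 else (n %% b) ^ e + digpow_aux f e b (n %/ b)
  end.

Definition S_eb (e b n : nat) : nat := digpow_aux n e b n.

Definition happy (e b n : nat) : Prop :=
  0 < n /\ exists l, 0 < l /\ iter l (S_eb e b) n = 1.

(* vertices of T^k_{e,b}: happy numbers with at most k base-b digits *)
Definition vertex_k (e b k m : nat) : Prop := happy e b m /\ m < b ^ k.

Definition child_k (e b k m n : nat) : Prop :=
  happy e b n /\ 1 <= n /\ n < b ^ k /\ n <> 1 /\ S_eb e b n = m.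

Definition num_children_k (e b k m c : nat) : Prop :=
  exists s : seq nat, uniq s /\ size s = c /\ (forall n, n \in s <-> child_k e b k m n).

(* Main.v *)
Require Import Defs.
From mathcomp Require Import all_boot.
From mathcomp Require Import zify.

Lemma aux_fuel e b : 1 < b -> forall f1 f2 n, n <= f1 -> n <= f2 ->
  digpow_aux f1 e b n = digpow_aux f2 e b n.
Proof.
move=> hb; elim=> [|f1 IH] [|f2] n h1 h2 /=.
- by [].
- by move: h1; rewrite leqn0 => /eqP ->.
- by move: h2; rewrite leqn0 => /eqP ->.
case: eqP => // /eqP n0; congr (_ + _); apply: IH.
- have : n %/ b < n by apply: ltn_Pdiv => //; lia.
  lia.
- have : n %/ b < n by apply: ltn_Pdiv => //; lia.
  lia.
Qed.


Notation S := (S_eb 2 3).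

Lemma S_rec n : S n = (n %% 3) ^ 2 + S (n %/ 3).
Proof.
rewrite /S_eb; case: n => [|n] //=.
congr (_ + _); apply: aux_fuel => //.
have : n.+1 %/ 3 < n.+1 by apply: ltn_Pdiv.
lia.
Qed.

Lemma S_dig q d : d < 3 -> S (d + q * 3) = d ^ 2 + S q.
Proof.
move=> hd; rewrite S_rec [d + _]addnC modnMDl modn_small // divnMDl // divn_small //.
by rewrite addn0.
Qed.


Lemma sum3 (F : nat -> nat) N :
  \sum_(0 <= n < 3 * N) F n = \sum_(0 <= q < N) (F (0 + q * 3) + F (1 + q * 3) + F (2 + q*3)).
Proof.
elim: N => [|N IH]; first by rewrite !big_geq.
have -> : 3 * N.+1 = (3 * N).+2.+1 by lia.
rewrite [RHS]big_nat_recr //= -IH.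
rewrite !big_nat_recr //= !addnA.
have e : forall a, a + N * 3 = (3 * N) + a by lia.
by rewrite !e addn0 addn1 addn2.
Qed.

Definition f k m := \sum_(0 <= n < 3 ^ k) (S n == m).

Lemma f_rec k m : f k.+1 m = f k m + (if m is m'.+1 then f k m' else 0)
  + (if m is m'.+4 then f k m' else 0).
Proof.
rewrite /f expnS sum3 !big_split /=.
congr (_ + _ + _).
- by apply: eq_bigr => i _; rewrite S_dig.
- case: m => [|m].
    by rewrite big1 // => i _; rewrite S_dig.
  by apply: eq_bigr => i _; rewrite S_dig.
- case: m => [|[|[|[|m]]]]; try (by rewrite big1 // => i _; rewrite S_dig).
  by apply: eq_bigr => i _; rewrite S_dig.
Qed.

Definition T k i j := 'C(k, j) * 'C(k - j, i).

Lemma T_rec k i j : T k.+1 i j = T k i j + (if i is i'.+1 then T k i' j else 0)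
  + (if j is j'.+1 then T k i j' else 0).
Proof.
rewrite /T; case: i => [|i]; case: j => [|j].
- by rewrite !bin0.
- rewrite !bin0 !binS; lia.
- rewrite !bin0 ?subn0 !binS; lia.
rewrite subSS binS.
case: (ltnP j k) => hkj.
  have -> : k - j = (k - j.+1).+1 by lia.
  rewrite binS; lia.
rewrite (bin_small (n:=k) (m:=j.+1)) ?ltnS // !mul0n add0n.
Qed.

Definition G k m := \sum_(0 <= j < (m %/ 4).+1) T k (m - 4 * j) j.

Lemma G_rec k m : G k.+1 m = G k m + (if m is m'.+1 then G k m' else 0)
  + (if m is m'.+4 then G k m' else 0).
Proof.
rewrite /G.
under eq_bigr => j _ do rewrite T_rec.
rewrite !big_split /=.
congr (_ + _ + _).
- case: m => [|m]; first by rewrite big_nat1.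
  rewrite (eq_bigr (fun j => if j < (m%/4).+1 then T k (m - 4*j) j else 0)); last first.
    move=> j _; case: ltnP => hj.
      have -> : m.+1 - 4 * j = (m - 4 * j).+1.
        have : j <= m %/ 4 by [].
        rewrite leq_divRL //; lia.
      by [].
    have -> : m.+1 - 4 * j = 0.
      have : m %/ 4 < j by [].
      rewrite ltn_divLR //; lia.
    by [].
  rewrite -big_mkcond /= [RHS](big_nat_widen 0 (m%/4).+1 ((m.+1)%/4).+1 xpredT).
    by apply: eq_bigl.
  rewrite ltnS; apply: leq_div2r; lia.
- case: m => [|m]; first by rewrite big_nat1.
  rewrite big_nat_recl //= add0n.
  case: m => [|[|[|m]]]; try by rewrite big_geq.
  have -> : m.+4 %/ 4 = (m %/ 4).+1.
    have -> : m.+4 = 1 * 4 + m by lia.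
    by rewrite divnMDl.
  apply: eq_bigr => j _.
  by have -> : m.+4 - 4 * j.+1 = m - 4 * j by lia.
Qed.

Lemma f_G k m : f k m = G k m.
Proof.
elim: k m => [|k IH] m.
  rewrite /f /G expn0 big_nat1 big_nat_recl // big1 ?addn0 /T; last first.
    by move=> j _; rewrite bin0n mul0n.
  rewrite muln0 subn0 bin0 mul1n.
  by case: m.
by rewrite f_rec G_rec !IH; case: m => [|[|[|[|m]]]]; rewrite ?IH.
Qed.

Theorem mainTheorem3 (k m : nat) :
  1 <= k -> 3 < m -> vertex_k 2 3 k m ->
  num_children_k 2 3 k m
    (\sum_(0 <= j < (m %/ 4).+1) 'C(k, j) * 'C(k - j, m - 4 * j)).
Proof.
move=> hk hm [[hm0 [l [hl hit]]] hmk].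
exists [seq n <- iota 0 (3 ^ k) | S_eb 2 3 n == m]; split; [|split].
- by rewrite filter_uniq // iota_uniq.
- rewrite -[RHS]/(G k m) -f_G /f -sum1_size big_filter big_mkcond /=.
  rewrite /index_iota subn0; apply: eq_bigr => i _; by case: (_ == m).
move=> n; rewrite mem_filter mem_iota add0n /=; split.
- case/andP => /eqP hS hn.
  have n0 : 0 < n by case: n hS hn => // hS; rewrite /S_eb /= in hS; lia.
  split; [split => //|split => //; split => //; split => //].
    exists l.+1; split => //; by rewrite iterSr hS.
  move=> e; move: hS; rewrite e; have -> : S_eb 2 3 1 = 1 by []; lia.
case=> _ [_ [hn [_ hS]]].
by rewrite hS eqxx hn.
Qed.
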